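(* Let $P=[\tfrac12]_{m\times p}$ be the $m\times p$ matrix all of whose entries are $\tfrac12$. Then no ranking satisfies $(\rho,\delta)$-equal representation for any $\rho<1$ and $\delta\le\tfrac12$.
   Context: A ranking is a matrix $R\in\{0,1\}^{m\times n}$ with $\sum_{j} R_{ij}\le 1$ for each item $i\in[m]$ and $\sum_{i} R_{ij}=1$ for each position $j\in[n]$. Noise model: the groups $G_1,\dots,G_p\subseteq[m]$ are random with $\Pr[i\in G_\ell]=P_{i\ell}$, and events concerning distinct items are independent. A ranking $R$ (deterministic or random independent of the groups) satisfies $(\rho,\delta)$-equal representation if with probability at least $1-\delta$, for all $k\in[n]$ and $\ell\in[p]$, at most $\frac k2(1+\rho)$ items from $G_\ell$ appear in the first $k$ positions of $R$. *)

(* Defs.v *)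
From HB Require Import structures.
From mathcomp Require Import all_boot all_order all_algebra.
Set Implicit Arguments. Unset Strict Implicit. Unset Printing Implicit Defensive.
Import Order.TTheory GRing.Theory Num.Theory.
Local Open Scope ring_scope.

Section Defs.
Variable R : realFieldType.

Definition is_distr (T : finType) (mu : T -> R) : Prop :=
  (forall x, 0 <= mu x) /\ \sum_(x : T) mu x = 1.

Definition prob (T : finType) (mu : T -> R) (A : pred T) : R :=
  \sum_(x : T | A x) mu x.

(* An outcome of the random groups: g i l = true  iff  item i belongs to G_l. *)
Definition groups_outcome (m p : nat) := {ffun 'I_m -> {ffun 'I_p -> bool}}.

Definition noise_model (m p : nat) (P : 'M[R]_(m, p))
    (mu : groups_outcome m p -> R) : Prop :=
  [/\ is_distr mu,
      (forall (i : 'I_m) (l : 'I_p), prob mu (fun g => g i l) = P i l)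
    & (forall A : 'I_m -> pred {ffun 'I_p -> bool},
        prob mu (fun g => [forall i, A i (g i)])
        = \prod_(i : 'I_m) prob mu (fun g => A i (g i)))].

Definition is_ranking (m n : nat) (Rk : 'M[bool]_(m, n)) : Prop :=
  (forall i : 'I_m, (\sum_(j : 'I_n) (Rk i j : nat) <= 1)%N) /\
  (forall j : 'I_n, (\sum_(i : 'I_m) (Rk i j : nat))%N = 1%N).

Definition top_count (m n p : nat) (Rk : 'M[bool]_(m, n))
    (g : groups_outcome m p) (l : 'I_p) (k : nat) : nat :=
  (\sum_(i : 'I_m) \sum_(j : 'I_n | (j < k)%N) (Rk i j && g i l))%N.

Definition fair_event (m n p : nat) (rho : R) (Rk : 'M[bool]_(m, n))
    (g : groups_outcome m p) : bool :=
  [forall l : 'I_p, forall k : 'I_n,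
     (top_count Rk g l k.+1)%:R <= (k.+1)%:R / 2 * (1 + rho)].

(* A random ranking (independent of the groups): a distribution on matrices
   supported on rankings. Deterministic rankings are Dirac distributions. *)
Definition random_ranking (m n : nat) (nu : 'M[bool]_(m, n) -> R) : Prop :=
  is_distr nu /\ (forall Rk, nu Rk != 0 -> is_ranking Rk).

Definition equal_representation (m n p : nat) (mu : groups_outcome m p -> R)
    (nu : 'M[bool]_(m, n) -> R) (rho delta : R) : Prop :=
  1 - delta <= \sum_(Rk : 'M[bool]_(m, n)) nu Rk * prob mu (fair_event rho Rk).

End Defs.

(* Main.v *)
Require Import Defs.
From HB Require Import structures.
From mathcomp Require Import all_boot all_order all_algebra.
From mathcomp Require Import lra.
Import Order.TTheory GRing.Theory Num.Theory.
Local Open Scope ring_scope.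

Lemma prob_fair_le (R : realFieldType) (m n p : nat)
    (mu : groups_outcome m p -> R) (hn : (0 < n)%N) (hp : (0 < p)%N)
    (rho : R) (Rk : 'M[bool]_(m, n)) :
  noise_model (const_mx (1 / 2 : R)) mu -> rho < 1 -> is_ranking Rk ->
  prob mu (fair_event rho Rk) <= 1 / 2.
Proof.
move=> [[mu0 mu1] hP _] hrho [_ hcol].
set j0 : 'I_n := Ordinal hn.
set l0 : 'I_p := Ordinal hp.
have [i0 hi0] : exists i0, Rk i0 j0.
  case: (pickP (fun i => Rk i j0)) => [i hi|H]; first by exists i.
  by move: (hcol j0); rewrite big1 // => i _; rewrite H.
have himp : forall g, fair_event rho Rk g -> ~~ g i0 l0.
  move=> g /forallP /(_ l0) /forallP /(_ j0) /= Hf; apply/negP => Hg.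
  have h1 : (1 <= top_count Rk g l0 1)%N.
    rewrite /top_count (bigD1 i0) //= (bigD1 j0) //= hi0 Hg.
    by rewrite add1n.
  have : (1 : R) <= 1 / 2 * (1 + rho).
    apply: le_trans Hf; by rewrite ler1n.
  lra.
have hsplit : 1 = \sum_(g : groups_outcome m p | g i0 l0) mu g + \sum_(g : groups_outcome m p | ~~ g i0 l0) mu g.
  by rewrite -mu1 (bigID (fun g : groups_outcome m p => g i0 l0)).
have hA := hP i0 l0; rewrite mxE /prob in hA.
apply: (@le_trans _ _ (\sum_(g : groups_outcome m p | ~~ g i0 l0) mu g)).
  rewrite /prob [X in _ <= X]big_mkcond [X in X <= _]big_mkcond /=.
  apply: ler_sum => g _.
  case hf: (fair_event rho Rk g); case hg: (g i0 l0) => //=.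
  by move: (himp g hf); rewrite hg.
rewrite hA in hsplit.
lra.
Qed.

Theorem proposition3p3 (R : realFieldType) (m n p : nat)
    (mu : groups_outcome m p -> R) :
  (0 < n)%N -> (0 < p)%N ->
  noise_model (const_mx (1 / 2 : R)) mu ->
  forall (nu : 'M[bool]_(m, n) -> R) (rho delta : R),
    random_ranking nu -> rho < 1 -> delta < 1 / 2 ->
    ~ equal_representation mu nu rho delta.
Proof.
move=> hn hp hmu nu rho delta [[nu0 nu1] hrk] hrho hdelta.
rewrite /equal_representation => H.
have : \sum_(Rk : 'M[bool]_(m, n)) nu Rk * prob mu (fair_event rho Rk)
        <= \sum_(Rk : 'M[bool]_(m, n)) nu Rk * (1 / 2).
  apply: ler_sum => Rk _.
  have [->|nz] := eqVneq (nu Rk) 0; first by rewrite !mul0r.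
  apply: ler_wpM2l => //.
  exact: prob_fair_le hn hp rho Rk hmu hrho (hrk Rk nz).
rewrite -mulr_suml nu1 mul1r => H2.
have := le_trans H H2. lra.
Qed.
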